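(* Let $T=(T_{r,k})_{r,k\ge 0}$ be a number triangle with arithmetic sequences on all major and minor diagonals, i.e. there are integers $c_r$ ($r\ge 0$) and $b_k$ ($k\ge 0$) such that $T_{r,k}=T_{r,0}+kc_r$ and $T_{r,k}=T_{0,k}+rb_k$ for all $r,k\ge 0$. Then there exists $d\in\mathbb{Z}$ such that $d=c_r-c_{r-1}=b_k-b_{k-1}$ for all $r,k\ge 1$.
   Context: A number triangle is an array of integers $T_{r,k}$ indexed by integers $r,k\ge 0$, arranged so that row $n$ consists of entries with $r+k=n$. The $r$-th major diagonal is the sequence $(T_{r,k})_{k\ge 0}$ and the $k$-th minor diagonal is the sequence $(T_{r,k})_{r\ge 0}$. *)

(* Defs.v *)
(* integers Z. A number triangle is T : nat -> nat -> Z,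
   T r k the entry with r + k = n in row n. *)
From Stdlib Require Export ZArith.

(* Main.v *)
Require Import Defs.
From Stdlib Require Import ZArith Lia.
Open Scope Z_scope.

Theorem mainTheorem5 (T : nat -> nat -> Z) (c b : nat -> Z)
  (Hmaj : forall r k : nat, T r k = T r 0%nat + Z.of_nat k * c r)
  (Hmin : forall r k : nat, T r k = T 0%nat k + Z.of_nat r * b k) :
  exists d : Z,
    (forall r : nat, (1 <= r)%nat -> d = c r - c (r - 1)%nat) /\
    (forall k : nat, (1 <= k)%nat -> d = b k - b (k - 1)%nat).
Proof.
  assert (K : forall r k, Z.of_nat r * (b k - b 0%nat) = Z.of_nat k * (c r - c 0%nat)).
  { intros r k. pose proof (Hmaj r k). pose proof (Hmin r k).
    pose proof (Hmin r 0%nat). pose proof (Hmaj 0%nat k). simpl in *.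
    rewrite Z.mul_sub_distr_l, Z.mul_sub_distr_l. lia. }
  assert (Kc : forall r, c r = c 0%nat + Z.of_nat r * (c 1%nat - c 0%nat)).
  { intro r. pose proof (K r 1%nat) as H1. pose proof (K 1%nat 1%nat) as H2. change (Z.of_nat 1) with 1 in *.
    assert (E : b 1%nat - b 0%nat = c 1%nat - c 0%nat) by lia. rewrite E in H1. lia. }
  assert (Kb : forall k, b k = b 0%nat + Z.of_nat k * (c 1%nat - c 0%nat)).
  { intro k. pose proof (K 1%nat k). change (Z.of_nat 1) with 1 in *. lia. }
  exists (c 1%nat - c 0%nat). split.
  - intros r Hr. destruct r as [|r]; [lia|]. simpl. rewrite Nat.sub_0_r.
    rewrite (Kc (S r)), (Kc r). rewrite Nat2Z.inj_succ. ring.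
  - intros k Hk. destruct k as [|k]; [lia|]. simpl. rewrite Nat.sub_0_r.
    rewrite (Kb (S k)), (Kb k). rewrite Nat2Z.inj_succ. ring.
Qed.
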